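(* Assume (STAB). There exist constants $\lambda_{d,R}$ ($R>2$) such that $$\langle\delta^2E(\hat y+\Pi_Ru)v,v\rangle\ge\lambda_{d,R}\|Dv\|_{\ell^2}^2\qquad\text{for all }v\in\mathscr W_0(\Lambda),$$ and $\lambda_{d,R}\to\lambda_d>0$ as $R\to\infty$.
   Context: Lattice $\Lambda:=\tfrac{a_1+a_2}{3}+\{ma_1+na_2:m,n\in\mathbb Z\}$, $a_1=(1,0)^T$, $a_2=(\tfrac12,\tfrac{\sqrt3}2)^T$; bonds $\mathcal B$ oriented nearest-neighbour pairs; cells: triangles of mutually nearest-neighbour lattice points; $C_0$ the cell with barycentre $0$. $Dy_b:=y(\eta)-y(\xi)$; $\xi_0=(0,\sqrt3/3)^T$; $\mathscr W_0(\Lambda)=\{v:v(\xi_0)=0,\mathrm{supp}(Dv)\text{ bounded}\}$; $\dot{\mathscr W}^{1,2}(\Lambda)=\{v:v(\xi_0)=0,Dv\in\ell^2(\mathcal B)\}$. $\psi\in C^4(\mathbb R)$, $1$-periodic, even; $E(y;\tilde y):=\sum_{b\in\mathcal B}[\psi(Dy_b)-\psi(D\tilde y_b)]$; $\langle\delta^2E(y)v,w\rangle:=\sum_b\psi''(Dy_b)Dv_bDw_b$. $\hat y(x)=\frac1{2\pi}\arg(x)$ (branch cut on positive $x_1$-axis). (STAB): there is $u\in\dot{\mathscr W}^{1,2}(\Lambda)$ such that $\hat y+u$ is a strongly stable equilibrium of $E$ (locally minimal among perturbations $w\in\mathscr W_0(\Lambda)$ with small $\|Dw\|_{\ell^2}$,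 and $\langle\delta^2E(\hat y+u)v,v\rangle\ge\lambda_d\|Dv\|_{\ell^2}^2$ for all $v\in\mathscr W_0(\Lambda)$, with $\lambda_d>0$ fixed). Truncation: $\eta\in C^1(\mathbb R^2)$ with $\eta=1$ on $|x|\le\frac34$, $\eta=0$ on $|x|\ge1$; $Iu$ the piecewise affine interpolant of $u$ over the cells; $A_R:=B_R(0)\setminus B_{R/2+1}(0)$; $\Pi_Ru(\xi):=\eta(\xi/R)(u(\xi)-a_R)$ with $a_R$ the average of $Iu$ over $A_R$. *)

(* Defs.v *)
From Stdlib Require Import Reals Lra ZArith ClassicalEpsilon.
Open Scope R_scope.

(* Limit of a real sequence (0 if it does not converge). *)
Definition Lim (u : nat -> R) : R :=
  match excluded_middle_informative (exists l, Un_cv u l) with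
  | left H => proj1_sig (constructive_indefinite_description _ H)
  | right _ => 0
  end.

(* Riemann integral of f over [a,b] (0 if f is not Riemann integrable). *)
Definition RInt (f : R -> R) (a b : R) : R :=
  match excluded_middle_informative
          (exists pr : Riemann_integrable f a b, True) with
  | left H => RiemannInt (proj1_sig (constructive_indefinite_description _ H))
  | right _ => 0
  end.

Definition norm2 (x1 x2 : R) : R := sqrt (x1 * x1 + x2 * x2).

(* Site (m,n) : Z*Z is the point (a1+a2)/3 + m a1 + n a2,
   a1 = (1,0), a2 = (1/2, sqrt3/2). *)
Definition posx (m n : Z) : R := / 2 + IZR m + IZR n / 2.
Definition posy (m n : Z) : R := sqrt 3 / 6 + IZR n * (sqrt 3 / 2).

Definition LFun := Z -> Z -> R.

(* the six nearest-neighbour directions (oriented bonds (xi, xi + dir k)) *)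
Definition dirm (k : nat) : Z :=
  match k with O => 1%Z | 1%nat => 0%Z | 2%nat => (-1)%Z | 3%nat => (-1)%Z | 4%nat => 0%Z | _ => 1%Z end.
Definition dirn (k : nat) : Z :=
  match k with O => 0%Z | 1%nat => 1%Z | 2%nat => 1%Z | 3%nat => 0%Z | 4%nat => (-1)%Z | _ => (-1)%Z end.

Definition Dif (y : LFun) (m n : Z) (k : nat) : R :=
  y (m + dirm k)%Z (n + dirn k)%Z - y m n.

Definition box_sum (g : Z -> Z -> R) (N : nat) : R :=
  sum_f_R0 (fun i =>
    sum_f_R0 (fun j => g (Z.of_nat i - Z.of_nat N)%Z (Z.of_nat j - Z.of_nat N)%Z)
      (2 * N)) (2 * N).

Definition bond_box_sum (f : Z -> Z -> nat -> R) (N : nat) : R :=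
  box_sum (fun m n => sum_f_R0 (fun k => f m n k) 5) N.
Definition bsum (f : Z -> Z -> nat -> R) : R := Lim (bond_box_sum f).

Definition Dnorm2 (v : LFun) : R := bsum (fun m n k => Dif v m n k ^ 2).

(* xi_0 = (0, -sqrt3/3) = site (0,-1) *)
Definition xi0m : Z := 0%Z.
Definition xi0n : Z := (-1)%Z.

Definition in_W0 (v : LFun) : Prop :=
  v xi0m xi0n = 0 /\
  exists N : Z, forall m n k, (k <= 5)%nat ->
    (N < Z.abs m \/ N < Z.abs n)%Z -> Dif v m n k = 0.

Definition in_W12 (v : LFun) : Prop :=
  v xi0m xi0n = 0 /\ exists l, Un_cv (bond_box_sum (fun m n k => Dif v m n k ^ 2)) l.

Definition Ediff (psi : R -> R) (y yt : LFun) : R :=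
  bsum (fun m n k => psi (Dif y m n k) - psi (Dif yt m n k)).
Definition hess (psi2 : R -> R) (y v w : LFun) : R :=
  bsum (fun m n k => psi2 (Dif y m n k) * Dif v m n k * Dif w m n k).

(* arg x in [0, 2 pi), branch cut on the positive x1-axis *)
Definition argR (x1 x2 : R) : R :=
  if Rle_dec 0 x2 then acos (x1 / norm2 x1 x2)
  else 2 * PI - acos (x1 / norm2 x1 x2).
Definition yhat (x1 x2 : R) : R := argR x1 x2 / (2 * PI).
Definition yhat_lat : LFun := fun m n => yhat (posx m n) (posy m n).

Definition floorR (x : R) : Z := Int_part x.

(* piecewise affine interpolant of u over the triangular cells *)
Definition interp (u : LFun) (x1 x2 : R) : R :=
  let t := (x2 - sqrt 3 / 6) / (sqrt 3 / 2) in
  let s := x1 - / 2 - t / 2 in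
  let m := floorR s in
  let n := floorR t in
  let fs := s - IZR m in
  let ft := t - IZR n in
  if Rle_dec (fs + ft) 1 then
    u m n + fs * (u (m + 1)%Z n - u m n) + ft * (u m (n + 1)%Z - u m n)
  else
    u (m + 1)%Z (n + 1)%Z
    + (1 - fs) * (u m (n + 1)%Z - u (m + 1)%Z (n + 1)%Z)
    + (1 - ft) * (u (m + 1)%Z n - u (m + 1)%Z (n + 1)%Z).

Definition indA (R0 x1 x2 : R) : R :=
  if Rlt_dec (norm2 x1 x2) R0 then
    if Rle_dec (R0 / 2 + 1) (norm2 x1 x2) then 1 else 0
  else 0.

Definition aR (u : LFun) (R0 : R) : R :=
  RInt (fun x1 => RInt (fun x2 => indA R0 x1 x2 * interp u x1 x2) (- R0) R0)
       (- R0) R0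
  / (PI * (R0 ^ 2 - (R0 / 2 + 1) ^ 2)).

Definition PiR (eta : R -> R -> R) (u : LFun) (R0 : R) : LFun :=
  fun m n => eta (posx m n / R0) (posy m n / R0) * (u m n - aR u R0).

Definition cont2 (f : R -> R -> R) : Prop :=
  forall x1 x2 eps, 0 < eps -> exists del, 0 < del /\
    forall z1 z2, norm2 (z1 - x1) (z2 - x2) < del ->
      Rabs (f z1 z2 - f x1 x2) < eps.
Definition C1_2 (f : R -> R -> R) : Prop :=
  exists d1 d2 : R -> R -> R,
    (forall x1 x2, derivable_pt_lim (fun t => f t x2) x1 (d1 x1 x2)) /\
    (forall x1 x2, derivable_pt_lim (fun t => f x1 t) x2 (d2 x1 x2)) /\
    cont2 d1 /\ cont2 d2.

Definition add_lf (y z : LFun) : LFun := fun m n => y m n + z m n.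

(* Main.v *)
Require Import Defs.
From Stdlib Require Import Reals ZArith Lra Lia Psatz ClassicalEpsilon FunctionalExtensionality Classical.
From Coquelicot Require Compactness.
Open Scope R_scope.

Definition zsum (h : Z -> R) (N : nat) : R :=
  sum_f_R0 (fun i => h (Z.of_nat i - Z.of_nat N)%Z) (2 * N).

Lemma box_sum_zsum g N : box_sum g N = zsum (fun m => zsum (fun n => g m n) N) N.
Proof. reflexivity. Qed.

Lemma zsum_S h N : zsum h (S N) =
  h (- Z.of_nat (S N))%Z + zsum h N + h (Z.of_nat (S N)).
Proof.
  unfold zsum.
  replace (2 * S N)%nat with (S (S (2 * N))) by lia.
  rewrite tech5. rewrite decomp_sum by lia.
  simpl pred.
  rewrite (sum_eq _ (fun i => h (Z.of_nat i - Z.of_nat N)%Z)).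
  2:{ intros i _. f_equal. lia. }
  replace (Z.of_nat 0 - Z.of_nat (S N))%Z with (- Z.of_nat (S N))%Z by lia.
  replace (Z.of_nat (S (S (2 * N))) - Z.of_nat (S N))%Z with (Z.of_nat (S N)) by lia.
  reflexivity.
Qed.

Lemma zsum_ext h1 h2 N : (forall z, (Z.abs z <= Z.of_nat N)%Z -> h1 z = h2 z) ->
  zsum h1 N = zsum h2 N.
Proof. intros H; unfold zsum; apply sum_eq; intros i Hi; apply H; lia. Qed.

Lemma zsum_le h1 h2 N : (forall z, (Z.abs z <= Z.of_nat N)%Z -> h1 z <= h2 z) ->
  zsum h1 N <= zsum h2 N.
Proof. intros H; unfold zsum; apply sum_Rle; intros i Hi; apply H; lia. Qed.

Lemma zsum_lin h1 h2 c N : zsum (fun z => h1 z - c * h2 z) N = zsum h1 N - c * zsum h2 N.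
Proof.
  unfold zsum. rewrite scal_sum.
  rewrite minus_sum; try f_equal; apply sum_eq; intros; ring.
Qed.

Lemma zsum_nonneg h N : (forall z, 0 <= h z) -> 0 <= zsum h N.
Proof. intros H; unfold zsum; apply cond_pos_sum; intros; apply H. Qed.

Lemma zsum_stab h N : (forall z, (Z.of_nat N < Z.abs z)%Z -> h z = 0) ->
  forall M, (N <= M)%nat -> zsum h M = zsum h N.
Proof.
  intros H M HM. induction HM; [reflexivity|].
  rewrite zsum_S, IHHM, !H by lia. ring.
Qed.

Lemma zsum_grow h N : (forall z, 0 <= h z) -> zsum h N <= zsum h (S N).
Proof. intros H; rewrite zsum_S; pose proof (H (- Z.of_nat (S N))%Z); pose proof (H (Z.of_nat (S N))); lra. Qed.

Lemma zsum_single h N z : (forall z, 0 <= h z) -> (Z.abs z <= Z.of_nat N)%Z -> h z <= zsum h N.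
Proof.
  intros H. induction N; intros Hz.
  - unfold zsum; simpl. replace z with 0%Z by lia. right; reflexivity.
  - destruct (Z.eq_dec (Z.abs z) (Z.of_nat (S N))) as [E|E].
    + rewrite zsum_S. pose proof (zsum_nonneg h N H).
      pose proof (H (- Z.of_nat (S N))%Z); pose proof (H (Z.of_nat (S N))).
      destruct (Z.abs_spec z) as [[? ?]|[? ?]].
      * replace z with (Z.of_nat (S N)) by lia. lra.
      * replace z with (- Z.of_nat (S N))%Z by lia. lra.
    + pose proof (IHN ltac:(lia)). pose proof (zsum_grow h N H). lra.
Qed.

Lemma sum_single (f : nat -> R) n k : (forall i, 0 <= f i) -> (k <= n)%nat -> f k <= sum_f_R0 f n.
Proof.
  intros H. induction n; intros Hk.
  - replace k with 0%nat by lia. simpl; lra.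
  - rewrite tech5. destruct (Nat.eq_dec k (S n)).
    + subst. pose proof (cond_pos_sum f n H). lra.
    + pose proof (IHn ltac:(lia)). pose proof (H (S n)). lra.
Qed.

Lemma sum_zero n : sum_f_R0 (fun _ => 0) n = 0.
Proof. induction n; simpl; try rewrite IHn; lra. Qed.
Lemma bbs_le f g N : (forall m n k, (k <= 5)%nat -> f m n k <= g m n k) ->
  bond_box_sum f N <= bond_box_sum g N.
Proof.
  intros H. unfold bond_box_sum. rewrite !box_sum_zsum.
  apply zsum_le; intros; apply zsum_le; intros; apply sum_Rle; intros; apply H; lia.
Qed.

Lemma bbs_lin f g c N : bond_box_sum (fun m n k => f m n k - c * g m n k) N =
  bond_box_sum f N - c * bond_box_sum g N.
Proof.
  unfold bond_box_sum. rewrite !box_sum_zsum. rewrite <- zsum_lin.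
  apply zsum_ext; intros. rewrite <- zsum_lin. apply zsum_ext; intros.
  rewrite scal_sum, minus_sum; try f_equal; apply sum_eq; intros; ring.
Qed.

Definition outside (N : nat) (m n : Z) := (Z.of_nat N < Z.abs m \/ Z.of_nat N < Z.abs n)%Z.

Lemma bbs_stab f N : (forall m n k, (k <= 5)%nat -> outside N m n -> f m n k = 0) ->
  forall M, (N <= M)%nat -> bond_box_sum f M = bond_box_sum f N.
Proof.
  intros H M HM. unfold bond_box_sum. rewrite !box_sum_zsum.
  transitivity (zsum (fun m => zsum (fun n => sum_f_R0 (fun k => f m n k) 5) N) M).
  - apply zsum_ext; intros. apply zsum_stab; auto. intros w Hw.
    rewrite <- (sum_eq (fun _ => 0)).
    + rewrite sum_zero; reflexivity.
    + intros; symmetry; apply H; unfold outside; [lia|lia].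
  - apply zsum_stab; auto. intros z Hz.
    unfold zsum. rewrite <- (sum_eq (fun _ => 0)).
    + rewrite sum_zero; reflexivity.
    + intros i _. rewrite <- (sum_eq (fun _ => 0)).
      * rewrite sum_zero; reflexivity.
      * intros; symmetry; apply H; unfold outside; auto; lia.
Qed.

Lemma bbs_grow f N : (forall m n k, 0 <= f m n k) -> bond_box_sum f N <= bond_box_sum f (S N).
Proof.
  intros H. unfold bond_box_sum. rewrite !box_sum_zsum.
  assert (Hs : forall m n, 0 <= sum_f_R0 (fun k => f m n k) 5) by (intros; apply cond_pos_sum; auto).
  apply Rle_trans with (zsum (fun m => zsum (fun n => sum_f_R0 (fun k => f m n k) 5) N) (S N)).
  - apply zsum_grow. intros; apply zsum_nonneg; auto.
  - apply zsum_le; intros; apply zsum_grow; auto.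
Qed.

Lemma bbs_single f N m n k : (forall m n k, 0 <= f m n k) -> (k <= 5)%nat ->
  (Z.abs m <= Z.of_nat N)%Z -> (Z.abs n <= Z.of_nat N)%Z -> f m n k <= bond_box_sum f N.
Proof.
  intros H Hk Hm Hn. unfold bond_box_sum. rewrite box_sum_zsum.
  assert (Hs : forall m n, 0 <= sum_f_R0 (fun k => f m n k) 5) by (intros; apply cond_pos_sum; auto).
  eapply Rle_trans; [|apply zsum_single; [intros; apply zsum_nonneg; auto| exact Hm]].
  eapply Rle_trans; [|apply zsum_single; [auto| exact Hn]].
  apply (sum_single (fun k => f m n k)); auto.
Qed.

Lemma Lim_cv u l : Un_cv u l -> Lim u = l.
Proof.
  intros H. unfold Lim. destruct excluded_middle_informative as [e|n].
  - destruct constructive_indefinite_description as [l' Hl']. simpl. eapply UL_sequence; eauto.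
  - exfalso; apply n; eauto.
Qed.

Lemma bsum_stab f N : (forall m n k, (k <= 5)%nat -> outside N m n -> f m n k = 0) ->
  bsum f = bond_box_sum f N.
Proof.
  intros H. unfold bsum. apply Lim_cv. intros e He. exists N. intros M HM.
  rewrite (bbs_stab f N H M) by lia. unfold R_dist. rewrite Rminus_diag, Rabs_R0. lra.
Qed.

Definition outb (N : nat) (m n : Z) : bool := (Z.of_nat N <? Z.abs m)%Z || (Z.of_nat N <? Z.abs n)%Z.

Lemma outb_spec N m n : outb N m n = true <-> outside N m n.
Proof. unfold outb, outside. rewrite Bool.orb_true_iff, !Z.ltb_lt. tauto. Qed.

Lemma bbs_ext_box f g N : (forall m n k, (k <= 5)%nat -> ~ outside N m n -> f m n k = g m n k) ->
  bond_box_sum f N = bond_box_sum g N.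
Proof.
  intros H. unfold bond_box_sum. rewrite !box_sum_zsum. apply zsum_ext; intros.
  apply zsum_ext; intros. apply sum_eq; intros. apply H; [lia|unfold outside; lia].
Qed.

Lemma sq_le_abs x e : 0 <= e -> x ^ 2 <= e ^ 2 -> Rabs x <= e.
Proof. intros He H. destruct (Rle_dec (Rabs x) e) as [|n]; auto. exfalso.
  assert (e < Rabs x) by lra. assert (x^2 = Rabs x ^ 2) by (rewrite RPow_abs, Rabs_right; [reflexivity| apply Rle_ge, pow2_ge_0]). nra. Qed.

Section U.
Variable u : LFun.
Variable l : R.
Hypothesis Hl : Un_cv (bond_box_sum (fun m n k => Dif u m n k ^ 2)) l.
Let g := fun m n k => Dif u m n k ^ 2.
Lemma g_nonneg : forall m n k, 0 <= g m n k.
Proof. intros; unfold g; apply pow2_ge_0. Qed.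

Lemma S_grow : Un_growing (bond_box_sum g).
Proof. intros N. apply bbs_grow, g_nonneg. Qed.

Lemma S_le_l N : bond_box_sum g N <= l.
Proof. apply growing_ineq; [apply S_grow| exact Hl]. Qed.

Lemma l_nonneg : 0 <= l.
Proof. eapply Rle_trans; [|apply (S_le_l 0)]. unfold bond_box_sum. rewrite box_sum_zsum.
  apply zsum_nonneg; intros; apply zsum_nonneg; intros; apply cond_pos_sum; intros; apply g_nonneg. Qed.

Lemma term_bound m n k : (k <= 5)%nat -> Rabs (Dif u m n k) <= sqrt l.
Proof.
  intros Hk. apply sq_le_abs; [apply sqrt_pos|].
  rewrite pow2_sqrt by apply l_nonneg.
  eapply Rle_trans; [|apply (S_le_l (Z.to_nat (Z.max (Z.abs m) (Z.abs n))))].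
  apply (bbs_single g); auto; [apply g_nonneg|lia|lia].
Qed.

Lemma tail e : 0 < e -> exists N : nat, forall m n k, (k <= 5)%nat -> outside N m n ->
  Rabs (Dif u m n k) <= e.
Proof.
  intros He. destruct (Hl (e^2)) as [N HN]; [nra|].
  exists N. intros m n k Hk Ho.
  set (M := Nat.max N (Z.to_nat (Z.max (Z.abs m) (Z.abs n)))).
  set (g1 := fun m n k => if outb N m n then 0 else g m n k).
  set (g2 := fun m n k => if outb N m n then g m n k else 0).
  assert (E : bond_box_sum g M = bond_box_sum g1 M + bond_box_sum g2 M).
  { replace (bond_box_sum g1 M + bond_box_sum g2 M) with (bond_box_sum g1 M - (-1) * bond_box_sum g2 M) by ring.
    rewrite <- bbs_lin. apply bbs_ext_box. intros. unfold g1, g2. destruct outb; ring. }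
  assert (E1 : bond_box_sum g1 M = bond_box_sum g N).
  { rewrite (bbs_stab g1 N). 2:{ intros. unfold g1. apply outb_spec in H0. rewrite H0. reflexivity. }
    2: lia.
    apply bbs_ext_box. intros. unfold g1. destruct (outb N m0 n0) eqn:Eo; auto.
    apply outb_spec in Eo; contradiction. }
  assert (E2 : g m n k <= bond_box_sum g2 M).
  { replace (g m n k) with (g2 m n k). 2:{ unfold g2. apply outb_spec in Ho. rewrite Ho. reflexivity. }
    apply bbs_single; auto; [|lia|lia]. intros. unfold g2. destruct outb; [apply g_nonneg|lra]. }
  assert (HNN := HN N ltac:(lia)). unfold R_dist in HNN.
  pose proof (S_le_l N) as SN. pose proof (S_le_l M) as SM.
  apply sq_le_abs; [lra|]. fold (g m n k).
  apply Rabs_def2 in HNN. destruct HNN. unfold g in *. lra.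
Qed.
End U.

Lemma path_nat (g : nat -> R) P A e : 0 <= A -> 0 <= e ->
  (forall j, Rabs (g (S j) - g j) <= if le_dec j P then A else e) ->
  forall j, Rabs (g j - g 0%nat) <= A * INR (S P) + e * INR j.
Proof.
  intros HA He H.
  assert (forall j, Rabs (g j - g 0%nat) <= A * INR (Nat.min j (S P)) + e * INR j).
  { induction j.
    - simpl. rewrite Rminus_diag, Rabs_R0. lra.
    - pose proof (H j). replace (g (S j) - g 0%nat) with ((g (S j) - g j) + (g j - g 0%nat)) by ring.
      eapply Rle_trans; [apply Rabs_triang|]. rewrite S_INR.
      destruct (le_dec j P).
      + replace (Nat.min (S j) (S P)) with (S (Nat.min j (S P))) by lia. rewrite S_INR. lra.
      + replace (Nat.min (S j) (S P)) with (Nat.min j (S P)) by lia. lra. }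
  intros j. eapply Rle_trans; [apply H0|].
  assert (INR (Nat.min j (S P)) <= INR (S P)) by (apply le_INR; lia). nra.
Qed.

Lemma INR_to_nat z : (0 <= z)%Z -> INR (Z.to_nat z) = IZR z.
Proof. intros. rewrite INR_IZR_INZ, Z2Nat.id; auto. Qed.

Lemma growth u l (Hu0 : u 0%Z (-1)%Z = 0)
  (Hl : Un_cv (bond_box_sum (fun m n k => Dif u m n k ^ 2)) l) :
  forall e, 0 < e -> exists C, 0 <= C /\ forall m n,
    Rabs (u m n) <= C + e * (Rabs (IZR m) + Rabs (IZR n) + 1).
Proof.
  intros e He. destruct (tail u l Hl e He) as [N HN].
  set (A := sqrt l + e).
  assert (HA : 0 <= A) by (unfold A; pose proof (sqrt_pos l); lra).
  assert (Hs : forall m n k, (k <= 5)%nat -> Rabs (Dif u m n k) <= A /\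
     (outside N m n -> Rabs (Dif u m n k) <= e)).
  { intros m n k Hk. split; [|auto]. pose proof (term_bound u l Hl m n k Hk). unfold A; lra. }
  exists (2 * (A * INR (S (S N)))). split.
  { pose proof (pos_INR (S (S N))). nra. }
  intros m n.
  assert (Hrow : Rabs (u m (-1)%Z) <= A * INR (S (S N)) + e * Rabs (IZR m)).
  { destruct (Z_le_gt_dec 0 m) as [Hm|Hm].
    - set (g := fun j : nat => u (Z.of_nat j) (-1)%Z).
      assert (Hg : forall j, Rabs (g (S j) - g j) <= if le_dec j (S N) then A else e).
      { intros j. destruct (Hs (Z.of_nat j) (-1)%Z 0%nat ltac:(lia)) as [H1 H2].
        unfold Dif in H1, H2. simpl dirm in H1, H2; simpl dirn in H1, H2.
        replace (Z.of_nat j + 1)%Z with (Z.of_nat (S j)) in H1, H2 by lia.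
        replace (-1 + 0)%Z with (-1)%Z in H1, H2 by lia. unfold g.
        destruct le_dec; auto. apply H2. unfold outside. lia. }
      pose proof (path_nat g (S N) A e HA ltac:(lra) Hg (Z.to_nat m)) as P.
      unfold g in P. rewrite Z2Nat.id in P by lia. simpl Z.of_nat in P.
      rewrite Hu0, Rminus_0_r in P. rewrite INR_to_nat in P by lia.
      rewrite (Rabs_right (IZR m)) by (apply Rle_ge, IZR_le; lia). exact P.
    - set (g := fun j : nat => u (- Z.of_nat j)%Z (-1)%Z).
      assert (Hg : forall j, Rabs (g (S j) - g j) <= if le_dec j (S N) then A else e).
      { intros j. destruct (Hs (- Z.of_nat j)%Z (-1)%Z 3%nat ltac:(lia)) as [H1 H2].
        unfold Dif in H1, H2. simpl dirm in H1, H2; simpl dirn in H1, H2.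
        replace (- Z.of_nat j + -1)%Z with (- Z.of_nat (S j))%Z in H1, H2 by lia.
        replace (-1 + 0)%Z with (-1)%Z in H1, H2 by lia. unfold g.
        destruct le_dec; auto. apply H2. unfold outside. lia. }
      pose proof (path_nat g (S N) A e HA ltac:(lra) Hg (Z.to_nat (- m))) as P.
      unfold g in P. rewrite Z2Nat.id in P by lia. simpl Z.of_nat in P.
      replace (- - m)%Z with m in P by lia.
      replace (- 0)%Z with 0%Z in P by lia. rewrite Hu0, Rminus_0_r in P. rewrite INR_to_nat in P by lia.
      rewrite (Rabs_left (IZR m)) by (apply IZR_lt; lia). rewrite opp_IZR in P. exact P. }
  assert (Hcol : Rabs (u m n - u m (-1)%Z) <= A * INR (S (S N)) + e * (Rabs (IZR n) + 1)).
  { destruct (Z_le_gt_dec (-1) n) as [Hn|Hn].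
    - set (g := fun j : nat => u m (-1 + Z.of_nat j)%Z).
      assert (Hg : forall j, Rabs (g (S j) - g j) <= if le_dec j (S N) then A else e).
      { intros j. destruct (Hs m (-1 + Z.of_nat j)%Z 1%nat ltac:(lia)) as [H1 H2].
        unfold Dif in H1, H2. simpl dirm in H1, H2; simpl dirn in H1, H2.
        replace (-1 + Z.of_nat j + 1)%Z with (-1 + Z.of_nat (S j))%Z in H1, H2 by lia.
        replace (m + 0)%Z with m in H1, H2 by lia. unfold g.
        destruct le_dec; auto. apply H2. unfold outside. lia. }
      pose proof (path_nat g (S N) A e HA ltac:(lra) Hg (Z.to_nat (n + 1))) as P.
      unfold g in P. rewrite Z2Nat.id in P by lia. simpl Z.of_nat in P.
      replace (-1 + (n + 1))%Z with n in P by lia. replace (-1 + 0)%Z with (-1)%Z in P by lia.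
      rewrite INR_to_nat in P by lia. rewrite plus_IZR in P.
      assert (IZR n + 1 <= Rabs (IZR n) + 1) by (pose proof (Rle_abs (IZR n)); lra). nra.
    - set (g := fun j : nat => u m (-1 - Z.of_nat j)%Z).
      assert (Hg : forall j, Rabs (g (S j) - g j) <= if le_dec j (S N) then A else e).
      { intros j. destruct (Hs m (-1 - Z.of_nat j)%Z 4%nat ltac:(lia)) as [H1 H2].
        unfold Dif in H1, H2. simpl dirm in H1, H2; simpl dirn in H1, H2.
        replace (-1 - Z.of_nat j + -1)%Z with (-1 - Z.of_nat (S j))%Z in H1, H2 by lia.
        replace (m + 0)%Z with m in H1, H2 by lia. unfold g.
        destruct le_dec; auto. apply H2. unfold outside. lia. }
      pose proof (path_nat g (S N) A e HA ltac:(lra) Hg (Z.to_nat (-1 - n))) as P.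
      unfold g in P. rewrite Z2Nat.id in P by lia. simpl Z.of_nat in P.
      replace (-1 - (-1 - n))%Z with n in P by lia. replace (-1 - 0)%Z with (-1)%Z in P by lia.
      rewrite INR_to_nat in P by lia. rewrite minus_IZR in P.
      assert (-1 - IZR n <= Rabs (IZR n) + 1) by (pose proof (Rle_abs (- IZR n)); rewrite Rabs_Ropp in *; lra). nra. }
  replace (u m n) with ((u m n - u m (-1)%Z) + u m (-1)%Z) by ring.
  eapply Rle_trans; [apply Rabs_triang|]. lra.
Qed.

Lemma lip_of_deriv (f f' : R -> R) B : (forall x, derivable_pt_lim f x (f' x)) -> (forall x, Rabs (f' x) <= B) ->
  forall a b, Rabs (f b - f a) <= B * Rabs (b - a).
Proof.
  intros Hd HB.
  assert (K : forall a b, a < b -> Rabs (f b - f a) <= B * Rabs (b - a)).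
  { intros a b Hab. destruct (MVT_cor2 f f' a b Hab (fun c _ => Hd c)) as [c [E _]].
    rewrite E, Rabs_mult. apply Rmult_le_compat_r; [apply Rabs_pos|apply HB]. }
  intros a b. destruct (Rtotal_order a b) as [H|[H|H]].
  - auto.
  - subst. rewrite !Rminus_diag, Rabs_R0. pose proof (HB b). pose proof (Rabs_pos (f' b)). lra.
  - rewrite <- Rabs_Ropp, (Rabs_minus_sym b a). replace (- (f b - f a)) with (f a - f b) by ring. auto.
Qed.

Lemma deriv_periodic (f f' : R -> R) : (forall x, f (x + 1) = f x) -> (forall x, derivable_pt_lim f x (f' x)) ->
  forall x, f' (x + 1) = f' x.
Proof.
  intros Hp Hd x. apply (uniqueness_limite f x); [|apply Hd].
  intros eps Heps. destruct (Hd (x + 1) eps Heps) as [del Hdel].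
  exists del. intros h Hh0 Hh. specialize (Hdel h Hh0 Hh).
  replace (x + 1 + h) with ((x + h) + 1) in Hdel by ring. rewrite !Hp in Hdel. exact Hdel.
Qed.

Lemma periodic_nat (f : R -> R) : (forall x, f (x + 1) = f x) -> forall n x, f (x + INR n) = f x.
Proof.
  intros Hp n. induction n; intros x.
  - simpl. rewrite Rplus_0_r. reflexivity.
  - rewrite S_INR. replace (x + (INR n + 1)) with ((x + INR n) + 1) by ring. rewrite Hp. auto.
Qed.

Lemma periodic_Z (f : R -> R) : (forall x, f (x + 1) = f x) -> forall k x, f (x + IZR k) = f x.
Proof.
  intros Hp k x. destruct (Z_le_gt_dec 0 k).
  - rewrite <- (Z2Nat.id k) by lia. rewrite <- INR_IZR_INZ. apply periodic_nat; auto.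
  - rewrite <- (periodic_nat f Hp (Z.to_nat (- k))). rewrite INR_IZR_INZ, Z2Nat.id by lia.
    rewrite opp_IZR. f_equal. ring.
Qed.

Lemma periodic_bounded (f : R -> R) : (forall x, f (x + 1) = f x) -> (forall x, continuity_pt f x) ->
  exists B, forall x, Rabs (f x) <= B.
Proof.
  intros Hp Hc.
  destruct (continuity_ab_maj (fun x => Rabs (f x)) 0 1 ltac:(lra)) as [M [HM _]].
  { intros c _. apply (continuity_pt_comp f Rabs); auto. apply Rcontinuity_abs. }
  exists (Rabs (f M)). intros x.
  rewrite (Rplus_Int_part_frac_part x). rewrite Rplus_comm, periodic_Z; auto.
  apply HM. pose proof (base_Int_part x). unfold frac_part. lra.
Qed.

Lemma psi2_lip (psi psi1 psi2 psi3 psi4 : R -> R)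
  (Hd1 : forall x, derivable_pt_lim psi x (psi1 x))
  (Hd2 : forall x, derivable_pt_lim psi1 x (psi2 x))
  (Hd3 : forall x, derivable_pt_lim psi2 x (psi3 x))
  (Hd4 : forall x, derivable_pt_lim psi3 x (psi4 x))
  (Hper : forall x, psi (x + 1) = psi x) :
  exists K, 0 <= K /\ forall a b, Rabs (psi2 b - psi2 a) <= K * Rabs (b - a).
Proof.
  assert (P1 := deriv_periodic _ _ Hper Hd1).
  assert (P2 := deriv_periodic _ _ P1 Hd2).
  assert (P3 := deriv_periodic _ _ P2 Hd3).
  destruct (periodic_bounded psi3 P3) as [B HB].
  { intros x. apply derivable_continuous_pt. exists (psi4 x). apply Hd4. }
  exists B. split; [pose proof (HB 0); pose proof (Rabs_pos (psi3 0)); lra|].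
  apply lip_of_deriv with psi3; auto.
Qed.

Lemma norm2_nonneg x y : 0 <= norm2 x y.
Proof. unfold norm2; apply sqrt_pos. Qed.

Lemma norm2_sq x y : norm2 x y ^ 2 = x * x + y * y.
Proof. unfold norm2. rewrite pow2_sqrt; nra. Qed.

Lemma norm2_ge1 x y : Rabs x <= norm2 x y.
Proof. pose proof (norm2_sq x y). pose proof (norm2_nonneg x y).
  destruct (Rle_dec (Rabs x) (norm2 x y)); auto. exfalso.
  assert (Rabs x * Rabs x = x * x) by (rewrite <- Rabs_mult, Rabs_right; nra).
  nra. Qed.

Lemma norm2_sym x y : norm2 x y = norm2 y x.
Proof. unfold norm2; f_equal; ring. Qed.

Lemma norm2_ge2 x y : Rabs y <= norm2 x y.
Proof. rewrite norm2_sym; apply norm2_ge1. Qed.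

Lemma norm2_le x y : norm2 x y <= Rabs x + Rabs y.
Proof. unfold norm2. rewrite <- (sqrt_pow2 (Rabs x + Rabs y)) by (pose proof (Rabs_pos x); pose proof (Rabs_pos y); lra).
  apply sqrt_le_1_alt. pose proof (Rabs_pos x); pose proof (Rabs_pos y).
  assert (Rabs x * Rabs x = x * x) by (rewrite <- Rabs_mult, Rabs_right; nra).
  assert (Rabs y * Rabs y = y * y) by (rewrite <- Rabs_mult, Rabs_right; nra). nra. Qed.

Lemma norm2_shift1 c d p : norm2 (c + p) d <= norm2 c d + Rabs p.
Proof.
  pose proof (norm2_ge1 c d). pose proof (norm2_sq c d). pose proof (norm2_nonneg c d).
  set (s := norm2 c d) in *. pose proof (Rabs_pos p).
  unfold norm2. rewrite <- (sqrt_pow2 (s + Rabs p)) by lra. apply sqrt_le_1_alt.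
  assert (Rabs p * Rabs p = p * p) by (rewrite <- Rabs_mult, Rabs_right; nra).
  assert (c * p <= s * Rabs p).
  { destruct (Rle_dec 0 (c*p)).
    - rewrite <- (Rabs_right (c*p)) by lra. rewrite Rabs_mult. apply Rmult_le_compat_r; lra.
    - nra. }
  nra.
Qed.

Lemma norm2_tri a b c d : norm2 a b <= norm2 c d + Rabs (a - c) + Rabs (b - d).
Proof.
  replace a with (c + (a - c)) at 1 by ring.
  eapply Rle_trans; [apply norm2_shift1|].
  rewrite (norm2_sym c), (norm2_sym c d).
  replace b with (d + (b - d)) at 1 by ring.
  pose proof (norm2_shift1 d c (b - d)). lra.
Qed.

Lemma deriv_zero_out (eta d1 : R -> R -> R)
  (Heta0 : forall x1 x2, 1 <= norm2 x1 x2 -> eta x1 x2 = 0)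
  (Hd : forall x1 x2, derivable_pt_lim (fun t => eta t x2) x1 (d1 x1 x2)) :
  forall x1 x2, 1 < norm2 x1 x2 -> d1 x1 x2 = 0.
Proof.
  intros x1 x2 Hn. apply (uniqueness_limite (fun t => eta t x2) x1); auto.
  intros eps Heps. exists (mkposreal (norm2 x1 x2 - 1) ltac:(lra)). simpl. intros h Hh0 Hh.
  rewrite !Heta0.
  - replace ((0 - 0) / h - 0) with 0 by (field; auto). rewrite Rabs_R0; auto.
  - lra.
  - pose proof (norm2_tri x1 x2 (x1 + h) x2). replace (x2 - x2) with 0 in H by ring.
    replace (x1 - (x1 + h)) with (- h) in H by ring. rewrite Rabs_Ropp, Rabs_R0 in H. lra.
Qed.

Lemma cont2_bounded (f : R -> R -> R) : cont2 f ->
  exists B, forall x1 x2, Rabs x1 <= 2 -> Rabs x2 <= 2 -> Rabs (f x1 x2) <= B.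
Proof.
  intros Hc.
  set (delf := fun t1 t2 => proj1_sig (constructive_indefinite_description _ (Hc t1 t2 1 Rlt_0_1))).
  assert (Hdel : forall t1 t2, 0 < delf t1 t2 /\ forall z1 z2, norm2 (z1 - t1) (z2 - t2) < delf t1 t2 ->
     Rabs (f z1 z2 - f t1 t2) < 1).
  { intros. unfold delf. destruct constructive_indefinite_description as [x Hx]. simpl. exact Hx. }
  assert (Hpos : forall t1 t2, 0 < delf t1 t2 / 4) by (intros; destruct (Hdel t1 t2); lra).
  set (delta := fun t : Compactness.Tn 2 R => match t with (t1, (t2, _)) => mkposreal _ (Hpos t1 t2) end).
  destruct (Compactness.compactness_value 2 (-2, (-2, tt)) (2, (2, tt)) delta) as [d Hd].
  assert (UC : forall x1 x2 y1 y2, -2 <= x1 <= 2 -> -2 <= x2 <= 2 ->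
     Rabs (y1 - x1) < d -> Rabs (y2 - x2) < d -> Rabs (f y1 y2 - f x1 x2) < 2).
  { intros x1 x2 y1 y2 Hx1 Hx2 Hy1 Hy2. apply NNPP. intros Hn.
    apply (Hd (x1, (x2, tt))). { simpl. tauto. }
    intros [[t1 [t2 []]] [Hb [Hcl Hdt]]]. simpl in Hb, Hcl, Hdt.
    destruct Hcl as [C1 [C2 _]]. destruct (Hdel t1 t2) as [P Q].
    assert (A1 : Rabs (f x1 x2 - f t1 t2) < 1).
    { apply Q. pose proof (norm2_le (x1 - t1) (x2 - t2)). lra. }
    assert (A2 : Rabs (f y1 y2 - f t1 t2) < 1).
    { apply Q. pose proof (norm2_le (y1 - t1) (y2 - t2)).
      pose proof (Rabs_triang (y1 - x1) (x1 - t1)). pose proof (Rabs_triang (y2 - x2) (x2 - t2)).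
      replace (y1 - x1 + (x1 - t1)) with (y1 - t1) in * by ring.
      replace (y2 - x2 + (x2 - t2)) with (y2 - t2) in * by ring. lra. }
    apply Hn. replace (f y1 y2 - f x1 x2) with ((f y1 y2 - f t1 t2) + - (f x1 x2 - f t1 t2)) by ring.
    pose proof (Rabs_triang (f y1 y2 - f t1 t2) (- (f x1 x2 - f t1 t2))) as T. rewrite Rabs_Ropp in T. lra. }
  destruct d as [d dpos]. simpl in UC.
  destruct (archimed (4 / d)) as [Hup _].
  set (K := Z.to_nat (up (4 / d))).
  assert (HK : 4 / d < INR K).
  { unfold K. rewrite INR_IZR_INZ, Z2Nat.id. lra.
    assert (0 < 4 / d) by (apply Rdiv_lt_0_compat; lra).
    apply le_IZR. lra. }
  assert (Kpos : 0 < INR K) by (assert (0 < 4 / d) by (apply Rdiv_lt_0_compat; lra); lra).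
  assert (Hstep : 2 / INR K < d).
  { apply (Rmult_lt_reg_r (INR K)); auto. unfold Rdiv. rewrite Rmult_assoc, Rinv_l by lra.
    apply (Rmult_lt_reg_r (/ d)). apply Rinv_0_lt_compat; lra.
    replace (d * INR K * / d) with (INR K) by (field; lra). lra. }
  exists (Rabs (f 0 0) + 2 * INR K).
  intros x1 x2 Hx1 Hx2.
  assert (Cl : forall j, (j <= K)%nat -> Rabs (f (INR j / INR K * x1) (INR j / INR K * x2)) <= Rabs (f 0 0) + 2 * INR j).
  { induction j; intros Hj.
    - simpl. replace (0 / INR K * x1) with 0 by (field; lra). replace (0 / INR K * x2) with 0 by (field; lra). lra.
    - specialize (IHj ltac:(lia)).
      assert (Hj' : INR j <= INR K) by (apply le_INR; lia).
      assert (Hq : 0 <= INR j / INR K <= 1).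
      { split. apply Rmult_le_pos; [apply pos_INR| left; apply Rinv_0_lt_compat; lra].
        apply (Rmult_le_reg_r (INR K)); auto. unfold Rdiv. rewrite Rmult_assoc, Rinv_l by lra. lra. }
      assert (Sq : forall x, Rabs x <= 2 -> -2 <= INR j / INR K * x <= 2).
      { intros x Hx. assert (Rabs (INR j / INR K * x) <= 2) by (rewrite Rabs_mult, (Rabs_right (INR j / INR K)) by lra; nra).
        pose proof (Rle_abs (INR j / INR K * x)). pose proof (Rle_abs (- (INR j / INR K * x))). rewrite Rabs_Ropp in *. lra. }
      assert (U := UC (INR j / INR K * x1) (INR j / INR K * x2) (INR (S j) / INR K * x1) (INR (S j) / INR K * x2)
        (Sq x1 Hx1) (Sq x2 Hx2)).
      rewrite S_INR in *.
      replace ((INR j + 1) / INR K * x1 - INR j / INR K * x1) with (x1 / INR K) in U by (field; lra).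
      replace ((INR j + 1) / INR K * x2 - INR j / INR K * x2) with (x2 / INR K) in U by (field; lra).
      assert (Hd1 : Rabs (x1 / INR K) < d).
      { unfold Rdiv. rewrite Rabs_mult, (Rabs_right (/ INR K)) by (left; apply Rinv_0_lt_compat; lra).
        unfold Rdiv in Hstep. pose proof (Rinv_0_lt_compat _ Kpos). nra. }
      assert (Hd2 : Rabs (x2 / INR K) < d).
      { unfold Rdiv. rewrite Rabs_mult, (Rabs_right (/ INR K)) by (left; apply Rinv_0_lt_compat; lra).
        unfold Rdiv in Hstep. pose proof (Rinv_0_lt_compat _ Kpos). nra. }
      specialize (U Hd1 Hd2).
      pose proof (Rabs_triang_inv (f ((INR j + 1) / INR K * x1) ((INR j + 1) / INR K * x2)) (f (INR j / INR K * x1) (INR j / INR K * x2))).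
      lra. }
  specialize (Cl K (le_n K)). replace (INR K / INR K * x1) with x1 in Cl by (field; lra).
  replace (INR K / INR K * x2) with x2 in Cl by (field; lra). exact Cl.
Qed.

Lemma glob_bound (eta d1 : R -> R -> R)
  (Heta0 : forall x1 x2, 1 <= norm2 x1 x2 -> eta x1 x2 = 0)
  (Hd : forall x1 x2, derivable_pt_lim (fun t => eta t x2) x1 (d1 x1 x2)) (Hc : cont2 d1) :
  exists B, 0 <= B /\ forall x1 x2, Rabs (d1 x1 x2) <= B.
Proof.
  destruct (cont2_bounded d1 Hc) as [B HB]. exists (Rmax B 0). split; [apply Rmax_r|].
  intros x1 x2. destruct (Rle_dec (Rabs x1) 2); destruct (Rle_dec (Rabs x2) 2).
  - eapply Rle_trans; [apply HB; auto| apply Rmax_l].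
  - rewrite (deriv_zero_out eta d1 Heta0 Hd). rewrite Rabs_R0; apply Rmax_r.
    pose proof (norm2_ge2 x1 x2); lra.
  - rewrite (deriv_zero_out eta d1 Heta0 Hd). rewrite Rabs_R0; apply Rmax_r.
    pose proof (norm2_ge1 x1 x2); lra.
  - rewrite (deriv_zero_out eta d1 Heta0 Hd). rewrite Rabs_R0; apply Rmax_r.
    pose proof (norm2_ge1 x1 x2); lra.
Qed.

Lemma eta_lip (eta : R -> R -> R) (Heta : C1_2 eta)
  (Heta0 : forall x1 x2, 1 <= norm2 x1 x2 -> eta x1 x2 = 0) :
  exists L, 0 <= L /\ forall p1 p2 q1 q2,
    Rabs (eta p1 p2 - eta q1 q2) <= L * (Rabs (p1 - q1) + Rabs (p2 - q2)).
Proof.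
  destruct Heta as [d1 [d2 [Hd1 [Hd2 [C1 C2]]]]].
  destruct (glob_bound eta d1 Heta0 Hd1 C1) as [B1 [B1p HB1]].
  destruct (glob_bound (fun a b => eta b a) (fun a b => d2 b a)) as [B2 [B2p HB2]].
  { intros. apply Heta0. rewrite norm2_sym; auto. }
  { intros. apply Hd2. }
  { intros x1 x2 eps Heps. destruct (C2 x2 x1 eps Heps) as [del [Hdel H]]. exists del. split; auto.
    intros. apply H. rewrite norm2_sym; auto. }
  exists (Rmax B1 B2). split; [eapply Rle_trans; [apply B1p|apply Rmax_l]|].
  intros p1 p2 q1 q2.
  pose proof (lip_of_deriv (fun t => eta t p2) (fun t => d1 t p2) B1 (fun x => Hd1 x p2) (fun x => HB1 x p2) q1 p1).
  pose proof (lip_of_deriv (fun t => eta q1 t) (fun t => d2 q1 t) B2 (fun x => Hd2 q1 x) (fun x => HB2 x q1) q2 p2).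
  simpl in *.
  replace (eta p1 p2 - eta q1 q2) with ((eta p1 p2 - eta q1 p2) + (eta q1 p2 - eta q1 q2)) by ring.
  eapply Rle_trans; [apply Rabs_triang|].
  pose proof (Rmax_l B1 B2). pose proof (Rmax_r B1 B2).
  pose proof (Rabs_pos (p1 - q1)). pose proof (Rabs_pos (p2 - q2)). nra.
Qed.

Lemma sqrt3_b : 1.7 < sqrt 3 < 1.8.
Proof. pose proof (pow2_sqrt 3 ltac:(lra)). pose proof (sqrt_pos 3). split; nra. Qed.

Lemma IZR_abs1 z : (-1 <= z <= 1)%Z -> Rabs (IZR z) <= 1.
Proof. intros [H1 H2]. apply IZR_le in H1; apply IZR_le in H2. apply Rabs_le; lra. Qed.

Lemma dir_b k : (k <= 5)%nat -> (-1 <= dirm k <= 1)%Z /\ (-1 <= dirn k <= 1)%Z.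
Proof. intros Hk. do 6 (destruct k as [|k]; [simpl; lia|]). lia. Qed.

Lemma posx_diff m n k : (k <= 5)%nat ->
  Rabs (posx (m + dirm k) (n + dirn k) - posx m n) <= 3/2.
Proof. intros Hk. destruct (dir_b k Hk) as [H1 H2].
  unfold posx. rewrite !plus_IZR.
  replace (/ 2 + (IZR m + IZR (dirm k)) + (IZR n + IZR (dirn k)) / 2 - (/ 2 + IZR m + IZR n / 2))
    with (IZR (dirm k) + IZR (dirn k) / 2) by field.
  eapply Rle_trans; [apply Rabs_triang|]. unfold Rdiv. rewrite Rabs_mult, (Rabs_right (/2)) by lra.
  pose proof (IZR_abs1 _ H1). pose proof (IZR_abs1 _ H2). lra. Qed.

Lemma posy_diff m n k : (k <= 5)%nat ->
  Rabs (posy (m + dirm k) (n + dirn k) - posy m n) <= 1.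
Proof. intros Hk. destruct (dir_b k Hk) as [H1 H2].
  unfold posy. rewrite !plus_IZR.
  replace (sqrt 3 / 6 + (IZR n + IZR (dirn k)) * (sqrt 3 / 2) - (sqrt 3 / 6 + IZR n * (sqrt 3 / 2)))
    with (IZR (dirn k) * (sqrt 3 / 2)) by field.
  rewrite Rabs_mult, (Rabs_right (sqrt 3 / 2)) by (pose proof sqrt3_b; lra).
  pose proof (IZR_abs1 _ H2). pose proof sqrt3_b. pose proof (Rabs_pos (IZR (dirn k))). nra. Qed.

Lemma idx_bound m n : Rabs (IZR m) + Rabs (IZR n) + 1 <= 4 * norm2 (posx m n) (posy m n) + 5.
Proof.
  pose proof (norm2_ge1 (posx m n) (posy m n)). pose proof (norm2_ge2 (posx m n) (posy m n)).
  set (N := norm2 _ _) in *. pose proof sqrt3_b.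
  assert (Hn : Rabs (IZR n) * (sqrt 3 / 2) <= Rabs (posy m n) + 1).
  { rewrite <- (Rabs_right (sqrt 3 / 2)) by lra. rewrite <- Rabs_mult.
    replace (IZR n * (sqrt 3 / 2)) with (posy m n + - (sqrt 3 / 6)) by (unfold posy; ring).
    eapply Rle_trans; [apply Rabs_triang|]. rewrite Rabs_Ropp, (Rabs_right (sqrt 3 / 6)) by lra. lra. }
  assert (Hn2 : Rabs (IZR n) <= 2 * (Rabs (posy m n) + 1)).
  { pose proof (Rabs_pos (IZR n)). nra. }
  assert (Hm : Rabs (IZR m) <= Rabs (posx m n) + 1/2 + Rabs (IZR n) / 2).
  { replace (IZR m) with (posx m n + - (/ 2 + IZR n / 2)) by (unfold posx; ring).
    eapply Rle_trans; [apply Rabs_triang|]. rewrite Rabs_Ropp.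
    eapply Rle_trans; [apply Rplus_le_compat_l; apply Rabs_triang|].
    unfold Rdiv. rewrite Rabs_mult, (Rabs_right (/2)) by lra. lra. }
  lra.
Qed.

Lemma norm_pos_box N m n : (Z.abs m <= Z.of_nat N)%Z -> (Z.abs n <= Z.of_nat N)%Z ->
  norm2 (posx m n) (posy m n) <= 3 * INR N + 2.
Proof.
  intros Hm Hn. eapply Rle_trans; [apply norm2_le|].
  assert (Rabs (IZR m) <= INR N) by (rewrite INR_IZR_INZ, <- abs_IZR; apply IZR_le; lia).
  assert (Rabs (IZR n) <= INR N) by (rewrite INR_IZR_INZ, <- abs_IZR; apply IZR_le; lia).
  pose proof sqrt3_b.
  assert (Rabs (posx m n) <= 1/2 + INR N + INR N / 2).
  { unfold posx. eapply Rle_trans; [apply Rabs_triang|]. eapply Rle_trans; [apply Rplus_le_compat_r, Rabs_triang|].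
    rewrite (Rabs_right (/2)) by lra. unfold Rdiv. rewrite Rabs_mult, (Rabs_right (/2)) by lra. lra. }
  assert (Rabs (posy m n) <= 1/2 + INR N).
  { unfold posy. eapply Rle_trans; [apply Rabs_triang|].
    rewrite (Rabs_right (sqrt 3 / 6)) by lra. rewrite Rabs_mult, (Rabs_right (sqrt 3 / 2)) by lra.
    pose proof (Rabs_pos (IZR n)). nra. }
  pose proof (pos_INR N). lra.
Qed.

Lemma norm2_scale x y c : 0 < c -> norm2 (x / c) (y / c) = norm2 x y / c.
Proof.
  intros Hc. pose proof (norm2_nonneg (x/c) (y/c)). pose proof (norm2_nonneg x y).
  assert (0 <= norm2 x y / c) by (apply Rmult_le_pos; [lra| left; apply Rinv_0_lt_compat; lra]).
  rewrite <- (sqrt_pow2 (norm2 (x/c) (y/c))), <- (sqrt_pow2 (norm2 x y / c)) by lra.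
  f_equal. rewrite norm2_sq. replace ((norm2 x y / c) ^ 2) with (norm2 x y ^ 2 / (c * c)) by (field; lra). rewrite norm2_sq. field. lra.
Qed.

Lemma convex3 a b c A B C G : 0 <= a -> 0 <= b -> 0 <= c -> a + b + c = 1 ->
  Rabs A <= G -> Rabs B <= G -> Rabs C <= G -> Rabs (a * A + b * B + c * C) <= G.
Proof.
  intros. eapply Rle_trans; [apply Rabs_triang|]. eapply Rle_trans; [apply Rplus_le_compat_r, Rabs_triang|].
  rewrite !Rabs_mult, (Rabs_right a), (Rabs_right b), (Rabs_right c) by lra. nra.
Qed.

Lemma floor_b x : Rabs (IZR (floorR x)) <= Rabs x + 1.
Proof. unfold floorR. pose proof (base_Int_part x). apply Rabs_le.
  pose proof (Rle_abs x). pose proof (Rle_abs (-x)). rewrite Rabs_Ropp in *. lra. Qed.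

Lemma interp_bound (u : LFun) C e R0 x1 x2 : 0 <= e -> 0 <= R0 ->
  (forall m n, Rabs (u m n) <= C + e * (Rabs (IZR m) + Rabs (IZR n) + 1)) ->
  Rabs x1 <= R0 -> Rabs x2 <= R0 ->
  Rabs (interp u x1 x2) <= C + e * (4 * R0 + 9).
Proof.
  intros He HR Hg Hx1 Hx2. unfold interp.
  set (t := (x2 - sqrt 3 / 6) / (sqrt 3 / 2)).
  set (s := x1 - / 2 - t / 2).
  pose proof sqrt3_b.
  assert (Ht : Rabs t <= 2 * R0 + 2).
  { assert (E : t * (sqrt 3 / 2) = x2 - sqrt 3 / 6) by (unfold t; field; lra).
    assert (Rabs (x2 - sqrt 3 / 6) <= R0 + 1).
    { unfold Rminus. eapply Rle_trans; [apply Rabs_triang|]. rewrite Rabs_Ropp, (Rabs_right (sqrt 3 / 6)) by lra. lra. }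
    rewrite <- E, Rabs_mult, (Rabs_right (sqrt 3 / 2)) in H0 by lra.
    pose proof (Rabs_pos t). nra. }
  assert (Hs : Rabs s <= 2 * R0 + 2).
  { unfold s. replace (x1 - / 2 - t / 2) with (x1 + - (/2 + t / 2)) by ring.
    eapply Rle_trans; [apply Rabs_triang|]. rewrite Rabs_Ropp.
    eapply Rle_trans; [apply Rplus_le_compat_l, Rabs_triang|].
    rewrite (Rabs_right (/2)) by lra. unfold Rdiv. rewrite Rabs_mult, (Rabs_right (/2)) by lra. lra. }
  pose proof (floor_b s) as Fs. pose proof (floor_b t) as Ft.
  set (m := floorR s) in *. set (n := floorR t) in *.
  assert (Hv : forall dm dn, (0 <= dm <= 1)%Z -> (0 <= dn <= 1)%Z -> Rabs (u (m + dm)%Z (n + dn)%Z) <= C + e * (4 * R0 + 9)).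
  { intros dm dn Hdm Hdn. eapply Rle_trans; [apply Hg|]. apply Rplus_le_compat_l, Rmult_le_compat_l; auto.
    rewrite !plus_IZR. pose proof (Rabs_triang (IZR m) (IZR dm)). pose proof (Rabs_triang (IZR n) (IZR dn)).
    pose proof (IZR_abs1 dm ltac:(lia)). pose proof (IZR_abs1 dn ltac:(lia)). lra. }
  pose proof (Hv 0%Z 0%Z ltac:(lia) ltac:(lia)) as V00. pose proof (Hv 1%Z 0%Z ltac:(lia) ltac:(lia)) as V10.
  pose proof (Hv 0%Z 1%Z ltac:(lia) ltac:(lia)) as V01. pose proof (Hv 1%Z 1%Z ltac:(lia) ltac:(lia)) as V11.
  rewrite !Z.add_0_r in *.
  assert (Fs2 : 0 <= s - IZR m < 1) by (unfold m, floorR; pose proof (base_Int_part s); lra).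
  assert (Ft2 : 0 <= t - IZR n < 1) by (unfold n, floorR; pose proof (base_Int_part t); lra).
  destruct Rle_dec.
  - replace (u m n + (s - IZR m) * (u (m + 1)%Z n - u m n) + (t - IZR n) * (u m (n + 1)%Z - u m n))
      with ((1 - (s - IZR m) - (t - IZR n)) * u m n + (s - IZR m) * u (m + 1)%Z n + (t - IZR n) * u m (n + 1)%Z) by ring.
    apply convex3; auto; lra.
  - replace (u (m + 1)%Z (n + 1)%Z + (1 - (s - IZR m)) * (u m (n + 1)%Z - u (m + 1)%Z (n + 1)%Z) +
       (1 - (t - IZR n)) * (u (m + 1)%Z n - u (m + 1)%Z (n + 1)%Z))
      with (((s - IZR m) + (t - IZR n) - 1) * u (m + 1)%Z (n + 1)%Z + (1 - (s - IZR m)) * u m (n + 1)%Z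
            + (1 - (t - IZR n)) * u (m + 1)%Z n) by ring.
    apply convex3; auto; lra.
Qed.

Lemma RInt_bound f a b M : a <= b -> 0 <= M -> (forall x, a <= x <= b -> Rabs (f x) <= M) ->
  Rabs (RInt f a b) <= M * (b - a).
Proof.
  intros Hab HM Hf. unfold RInt. destruct excluded_middle_informative as [e|n].
  - destruct (constructive_indefinite_description _ e) as [pr Hpr]. simpl.
    pose proof (RiemannInt_P19 pr (RiemannInt_P14 a b M) Hab) as U.
    pose proof (RiemannInt_P19 (RiemannInt_P14 a b (-M)) pr Hab) as D.
    rewrite RiemannInt_P15 in U, D.
    apply Rabs_le. split.
    + assert (-M * (b - a) <= RiemannInt pr); [|lra]. apply D. intros x Hx. unfold fct_cte.
      pose proof (Hf x ltac:(lra)). pose proof (Rle_abs (- f x)). rewrite Rabs_Ropp in *. lra.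
    + apply U. intros x Hx. unfold fct_cte. pose proof (Hf x ltac:(lra)). pose proof (Rle_abs (f x)). lra.
  - rewrite Rabs_R0. nra.
Qed.

Lemma aR_bound (u : LFun) C e R0 : 0 <= e -> 2 < R0 -> 0 <= C ->
  (forall m n, Rabs (u m n) <= C + e * (Rabs (IZR m) + Rabs (IZR n) + 1)) ->
  Rabs (aR u R0) <= (2 * R0) * (2 * R0) * (C + e * (4 * R0 + 9)) / (PI * (R0 ^ 2 - (R0 / 2 + 1) ^ 2)).
Proof.
  intros He HR HC Hg. unfold aR.
  set (G := C + e * (4 * R0 + 9)).
  assert (HG : 0 <= G) by (unfold G; nra).
  assert (Hden : 0 < PI * (R0 ^ 2 - (R0 / 2 + 1) ^ 2)) by (pose proof PI_RGT_0; apply Rmult_lt_0_compat; nra).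
  unfold Rdiv. rewrite Rabs_mult, (Rabs_right (/ _)) by (left; apply Rinv_0_lt_compat; auto).
  apply Rmult_le_compat_r; [left; apply Rinv_0_lt_compat; auto|].
  replace (2 * R0 * (2 * R0) * G) with ((G * (R0 - - R0)) * (R0 - - R0)) by ring.
  apply RInt_bound; [lra| nra|]. intros x1 Hx1.
  apply RInt_bound; [lra|auto|]. intros x2 Hx2.
  rewrite Rabs_mult. assert (Rabs (indA R0 x1 x2) <= 1).
  { unfold indA. repeat destruct Rlt_dec; repeat destruct Rle_dec; rewrite ?Rabs_R1, ?Rabs_R0; lra. }
  pose proof (interp_bound u C e R0 x1 x2 He ltac:(lra) Hg ltac:(apply Rabs_le; lra) ltac:(apply Rabs_le; lra)).
  fold G in H0. pose proof (Rabs_pos (indA R0 x1 x2)). pose proof (Rabs_pos (interp u x1 x2)). nra.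
Qed.

Lemma eta_bounded (eta : R -> R -> R) L :
  (forall x1 x2, 1 <= norm2 x1 x2 -> eta x1 x2 = 0) ->
  (forall p1 p2 q1 q2, Rabs (eta p1 p2 - eta q1 q2) <= L * (Rabs (p1 - q1) + Rabs (p2 - q2))) ->
  0 <= L -> forall p1 p2, Rabs (eta p1 p2) <= 4 * L.
Proof.
  intros H0 HL HL0 p1 p2. destruct (Rle_dec 1 (norm2 p1 p2)).
  - rewrite H0, Rabs_R0 by auto. lra.
  - pose proof (HL p1 p2 2 0). rewrite (H0 2 0) in H.
    2:{ unfold norm2. replace (2*2+0*0) with (2^2) by ring. rewrite sqrt_pow2; lra. }
    rewrite Rminus_0_r in H. pose proof (norm2_ge1 p1 p2). pose proof (norm2_ge2 p1 p2).
    replace (p2 - 0) with p2 in H by ring.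
    assert (Rabs (p1 - 2) <= 3).
    { unfold Rminus; eapply Rle_trans; [apply Rabs_triang|]. rewrite Rabs_Ropp, (Rabs_right 2); lra. }
    nra.
Qed.

Lemma diff_est (eta : R -> R -> R) (u : LFun) L C e T R0
  (HL0 : 0 <= L)
  (HL : forall p1 p2 q1 q2, Rabs (eta p1 p2 - eta q1 q2) <= L * (Rabs (p1 - q1) + Rabs (p2 - q2)))
  (Heta1 : forall x1 x2, norm2 x1 x2 <= 3 / 4 -> eta x1 x2 = 1)
  (Heta0 : forall x1 x2, 1 <= norm2 x1 x2 -> eta x1 x2 = 0)
  (He : 0 <= e) (HC : 0 <= C)
  (Hg : forall m n, Rabs (u m n) <= C + e * (Rabs (IZR m) + Rabs (IZR n) + 1))
  (HT0 : 0 <= T)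
  (HT : forall m n k, (k <= 5)%nat -> 3 * R0 / 4 < norm2 (posx m n) (posy m n) -> Rabs (Dif u m n k) <= T)
  (HR : 2 < R0) :
  forall m n k, (k <= 5)%nat ->
  Rabs (Dif (PiR eta u R0) m n k - Dif u m n k) <=
    (1 + 4 * L) * T + (3 * L / R0) * (C + e * (4 * R0 + 15) + Rabs (aR u R0)).
Proof.
  intros m n k Hk.
  set (m' := (m + dirm k)%Z). set (n' := (n + dirn k)%Z).
  set (X := posx m n). set (Y := posy m n). set (X' := posx m' n'). set (Y' := posy m' n').
  set (a := aR u R0).
  set (ex := eta (X / R0) (Y / R0)). set (ey := eta (X' / R0) (Y' / R0)).
  assert (Id : Dif (PiR eta u R0) m n k - Dif u m n k = (ex - 1) * Dif u m n k + (ey - ex) * (u m' n' - a)).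
  { unfold Dif, PiR. fold m' n' X Y X' Y' a ex ey. ring. }
  rewrite Id. eapply Rle_trans; [apply Rabs_triang|].
  assert (Hb := eta_bounded eta L Heta0 HL HL0).
  assert (T1 : Rabs ((ex - 1) * Dif u m n k) <= (1 + 4 * L) * T).
  { destruct (Rle_dec (norm2 X Y) (3 * R0 / 4)).
    - unfold ex. rewrite Heta1. rewrite Rminus_diag, Rmult_0_l, Rabs_R0. nra.
      rewrite norm2_scale by lra. apply (Rmult_le_reg_r R0); [lra|]. unfold Rdiv. rewrite Rmult_assoc, Rinv_l by lra. lra.
    - rewrite Rabs_mult. assert (Rabs (ex - 1) <= 1 + 4 * L).
      { unfold Rminus. eapply Rle_trans; [apply Rabs_triang|]. rewrite Rabs_Ropp, Rabs_R1. unfold ex. pose proof (Hb (X/R0) (Y/R0)). lra. }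
      pose proof (HT m n k Hk ltac:(fold X Y; lra)). pose proof (Rabs_pos (ex - 1)). pose proof (Rabs_pos (Dif u m n k)). nra. }
  assert (Hpos : 0 <= 3 * L / R0) by (apply Rmult_le_pos; [lra| left; apply Rinv_0_lt_compat; lra]).
  assert (HA0 : 0 <= C + e * (4 * R0 + 15) + Rabs a) by (pose proof (Rabs_pos a); nra).
  assert (T2 : Rabs ((ey - ex) * (u m' n' - a)) <= (3 * L / R0) * (C + e * (4 * R0 + 15) + Rabs a)).
  { destruct (Rle_dec R0 (norm2 X Y)) as [N1|N1]; [destruct (Rle_dec R0 (norm2 X' Y')) as [N2|N2]|].
    - unfold ex, ey. rewrite !Heta0. rewrite Rminus_diag, Rmult_0_l, Rabs_R0. nra.
      all: rewrite norm2_scale by lra; apply (Rmult_le_reg_r R0); [lra|]; unfold Rdiv; rewrite Rmult_assoc, Rinv_l by lra; lra.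
    - rewrite Rabs_mult. 
      assert (Hdx : Rabs (X' - X) <= 3/2) by (apply posx_diff; auto).
      assert (Hdy : Rabs (Y' - Y) <= 1) by (apply posy_diff; auto).
      assert (E1 : Rabs (ey - ex) <= 3 * L / R0).
      { unfold ey, ex. eapply Rle_trans; [apply HL|].
        replace (X' / R0 - X / R0) with ((X' - X) / R0) by (field; lra).
        replace (Y' / R0 - Y / R0) with ((Y' - Y) / R0) by (field; lra).
        unfold Rdiv. rewrite !Rabs_mult, (Rabs_right (/ R0)) by (left; apply Rinv_0_lt_compat; lra).
        assert (0 < / R0) by (apply Rinv_0_lt_compat; lra). nra. }
      assert (E2 : Rabs (u m' n' - a) <= C + e * (4 * R0 + 15) + Rabs a).
      { unfold Rminus. eapply Rle_trans; [apply Rabs_triang|]. rewrite Rabs_Ropp.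
        pose proof (Hg m' n'). pose proof (idx_bound m' n'). fold X' Y' in H0. nra. }
      pose proof (Rabs_pos (ey - ex)). pose proof (Rabs_pos (u m' n' - a)). nra.
    - rewrite Rabs_mult.
      assert (Hdx : Rabs (X' - X) <= 3/2) by (apply posx_diff; auto).
      assert (Hdy : Rabs (Y' - Y) <= 1) by (apply posy_diff; auto).
      assert (E1 : Rabs (ey - ex) <= 3 * L / R0).
      { unfold ey, ex. eapply Rle_trans; [apply HL|].
        replace (X' / R0 - X / R0) with ((X' - X) / R0) by (field; lra).
        replace (Y' / R0 - Y / R0) with ((Y' - Y) / R0) by (field; lra).
        unfold Rdiv. rewrite !Rabs_mult, (Rabs_right (/ R0)) by (left; apply Rinv_0_lt_compat; lra).
        assert (0 < / R0) by (apply Rinv_0_lt_compat; lra). nra. }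
      assert (NX : norm2 X' Y' <= R0 + 5/2).
      { pose proof (norm2_tri X' Y' X Y). lra. }
      assert (E2 : Rabs (u m' n' - a) <= C + e * (4 * R0 + 15) + Rabs a).
      { unfold Rminus. eapply Rle_trans; [apply Rabs_triang|]. rewrite Rabs_Ropp.
        pose proof (Hg m' n'). pose proof (idx_bound m' n'). fold X' Y' in H0. nra. }
      pose proof (Rabs_pos (ey - ex)). pose proof (Rabs_pos (u m' n' - a)). nra. }
  lra.
Qed.

Definition Dv eta u R0 m n k := Rabs (Dif (PiR eta u R0) m n k - Dif u m n k).
Definition Dset eta u R0 (x : R) : Prop := exists m n k, (k <= 5)%nat /\ x = Dv eta u R0 m n k.
Lemma Dset_ne eta u R0 : exists x, Dset eta u R0 x.
Proof. exists (Dv eta u R0 0 0 0). exists 0%Z, 0%Z, 0%nat. split; [lia|reflexivity]. Qed.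
Definition delta eta u R0 : R :=
  match excluded_middle_informative (bound (Dset eta u R0)) with
  | left H => proj1_sig (completeness _ H (Dset_ne eta u R0))
  | right _ => 0 end.

Lemma delta_spec eta u R0 : bound (Dset eta u R0) ->
  (forall m n k, (k <= 5)%nat -> Dv eta u R0 m n k <= delta eta u R0) /\
  (forall M, (forall m n k, (k <= 5)%nat -> Dv eta u R0 m n k <= M) -> delta eta u R0 <= M) /\
  0 <= delta eta u R0.
Proof.
  intros Hb. unfold delta. destruct excluded_middle_informative as [H|H]; [|contradiction].
  destruct completeness as [x [H1 H2]]. simpl.
  assert (A : forall m n k, (k <= 5)%nat -> Dv eta u R0 m n k <= x).
  { intros. apply H1. exists m, n, k. auto. }
  split; [exact A|split].
  - intros M HM. apply H2. intros y [m [n [k [Hk ->]]]]. auto.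
  - eapply Rle_trans; [|apply (A 0%Z 0%Z 0%nat ltac:(lia))]. apply Rabs_pos.
Qed.

Theorem mainTheorem7
  (psi psi1 psi2 psi3 psi4 : R -> R)
  (Hd1 : forall x, derivable_pt_lim psi x (psi1 x))
  (Hd2 : forall x, derivable_pt_lim psi1 x (psi2 x))
  (Hd3 : forall x, derivable_pt_lim psi2 x (psi3 x))
  (Hd4 : forall x, derivable_pt_lim psi3 x (psi4 x))
  (Hc4 : forall x, continuity_pt psi4 x)
  (Hper : forall x, psi (x + 1) = psi x)
  (Heven : forall x, psi (- x) = psi x)
  (lambda_d : R) (Hlam : 0 < lambda_d)
  (u : LFun) (Hu : in_W12 u)
  (Hmin : exists eps, 0 < eps /\ forall w, in_W0 w -> sqrt (Dnorm2 w) < eps ->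
            0 <= Ediff psi (add_lf (add_lf yhat_lat u) w) (add_lf yhat_lat u))
  (Hstab : forall v, in_W0 v ->
            lambda_d * Dnorm2 v <= hess psi2 (add_lf yhat_lat u) v v)
  (eta : R -> R -> R) (Heta : C1_2 eta)
  (Heta1 : forall x1 x2, norm2 x1 x2 <= 3 / 4 -> eta x1 x2 = 1)
  (Heta0 : forall x1 x2, 1 <= norm2 x1 x2 -> eta x1 x2 = 0) :
  exists lam : R -> R,
    (forall R0, 2 < R0 -> forall v, in_W0 v ->
        lam R0 * Dnorm2 v <= hess psi2 (add_lf yhat_lat (PiR eta u R0)) v v) /\
    (forall eps, 0 < eps -> exists R1, forall R0, R1 < R0 ->
        Rabs (lam R0 - lambda_d) < eps).
Proof.
  destruct Hu as [Hu0 [l Hl]]. unfold xi0m, xi0n in Hu0.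
  destruct (psi2_lip psi psi1 psi2 psi3 psi4 Hd1 Hd2 Hd3 Hd4 Hper) as [K [HK0 HK]].
  destruct (eta_lip eta Heta Heta0) as [L [HL0 HL]].
  assert (Bnd : forall R0, 2 < R0 -> bound (Dset eta u R0)).
  { intros R0 HR. destruct (growth u l Hu0 Hl 1 Rlt_0_1) as [C [HC Hg]].
    exists ((1 + 4 * L) * sqrt l + (3 * L / R0) * (C + 1 * (4 * R0 + 15) + Rabs (aR u R0))).
    intros x [m [n [k [Hk ->]]]]. unfold Dv.
    apply (diff_est eta u L C 1 (sqrt l) R0); auto; try lra.
    - apply sqrt_pos.
    - intros. apply (term_bound u l Hl); auto. }
  exists (fun R0 => lambda_d - K * delta eta u R0). split.
  - intros R0 HR v [Hv0 [N HN]].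
    destruct (delta_spec eta u R0 (Bnd R0 HR)) as [Dl [_ D0]].
    set (N' := Z.to_nat N).
    assert (Hout : forall m n k, (k <= 5)%nat -> outside N' m n -> Dif v m n k = 0).
    { intros m n k Hk Ho. apply HN; auto. unfold outside, N' in Ho. lia. }
    unfold Dnorm2, hess in *. specialize (Hstab v (conj Hv0 (ex_intro _ N HN))).
    rewrite !(bsum_stab _ N') in *; try (intros m n k Hk Ho; rewrite Hout by auto; ring).
    set (dl := delta eta u R0) in *.
    apply Rle_trans with (bond_box_sum (fun m n k => psi2 (Dif (add_lf yhat_lat u) m n k) * Dif v m n k * Dif v m n k
        - (K * dl) * (Dif v m n k ^ 2)) N').
    + rewrite bbs_lin. lra.
    + apply bbs_le. intros m n k Hk.
      assert (E : Dif (add_lf yhat_lat (PiR eta u R0)) m n k - Dif (add_lf yhat_lat u) m n k =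
                  Dif (PiR eta u R0) m n k - Dif u m n k) by (unfold Dif, add_lf; ring).
      pose proof (HK (Dif (add_lf yhat_lat u) m n k) (Dif (add_lf yhat_lat (PiR eta u R0)) m n k)) as P.
      rewrite E in P. pose proof (Dl m n k Hk) as Q. unfold Dv in Q.
      assert (Rabs (psi2 (Dif (add_lf yhat_lat (PiR eta u R0)) m n k) - psi2 (Dif (add_lf yhat_lat u) m n k)) <= K * dl) by nra.
      pose proof (Rle_abs (- (psi2 (Dif (add_lf yhat_lat (PiR eta u R0)) m n k) - psi2 (Dif (add_lf yhat_lat u) m n k)))) as W.
      rewrite Rabs_Ropp in W. pose proof (pow2_ge_0 (Dif v m n k)). simpl. nra.
  - intros eps Heps.
    set (tau := eps / (K + 1)).
    assert (Htau : 0 < tau) by (unfold tau; apply Rdiv_lt_0_compat; lra).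
    set (e := tau / (2 * (1 + 64 * L))).
    assert (He : 0 < e) by (unfold e; apply Rdiv_lt_0_compat; lra).
    destruct (tail u l Hl e He) as [N HN].
    destruct (growth u l Hu0 Hl e He) as [C [HC Hg]].
    assert (Hq0 : 0 <= 24 * L * C / tau) by (apply Rmult_le_pos; [nra| left; apply Rinv_0_lt_compat; lra]).
    exists (20 + 4 * INR N + 24 * L * C / tau).
    intros R0 HR0. pose proof (pos_INR N).
    assert (HR : 2 < R0) by lra.
    destruct (delta_spec eta u R0 (Bnd R0 HR)) as [_ [Dm D0]].
    assert (Hdl : delta eta u R0 <= tau).
    { apply Dm. intros m n k Hk. unfold Dv.
      eapply Rle_trans.
      { apply (diff_est eta u L C e e R0); auto; try lra.
        intros m0 n0 k0 Hk0 Hn0. apply HN; auto. apply NNPP. intros Ho.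
        assert (Hb : norm2 (posx m0 n0) (posy m0 n0) <= 3 * INR N + 2).
        { apply norm_pos_box; unfold outside in Ho; lia. }
        lra. }
      pose proof (aR_bound u C e R0 ltac:(lra) HR HC Hg) as Ha.
      set (G0 := C + e * (4 * R0 + 9)) in Ha.
      set (den := PI * (R0 ^ 2 - (R0 / 2 + 1) ^ 2)) in Ha.
      assert (Pi3 : 3 < PI) by (pose proof PI2_3_2; lra).
      assert (Hden : 0 < den) by (unfold den; apply Rmult_lt_0_compat; nra).
      assert (Hd1' : 0 <= R0 ^ 2 - (R0 / 2 + 1) ^ 2) by nra.
      assert (Hd2' : 4 * R0 ^ 2 <= 9 * (R0 ^ 2 - (R0 / 2 + 1) ^ 2)) by nra.
      assert (Hden2 : 4 * R0 ^ 2 <= 3 * den).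
      { unfold den. assert (3 * (R0 ^ 2 - (R0 / 2 + 1) ^ 2) <= PI * (R0 ^ 2 - (R0 / 2 + 1) ^ 2)) by (apply Rmult_le_compat_r; lra). lra. }
      assert (HG0 : 0 <= G0) by (unfold G0; nra).
      assert (Ha2 : Rabs (aR u R0) <= 3 * G0).
      { eapply Rle_trans; [exact Ha|]. unfold Rdiv. apply (Rmult_le_reg_r den); auto.
        rewrite Rmult_assoc, Rinv_l by lra. nra. }
      set (q := 3 * L / R0).
      assert (Hq : q * R0 = 3 * L) by (unfold q; field; lra).
      assert (Hqp : 0 <= q) by (unfold q; apply Rmult_le_pos; [lra| left; apply Rinv_0_lt_compat; lra]).
      assert (HqL : q * 15 <= 3 * L) by nra.
      assert (HqC : 8 * q * C <= tau).
      { assert (24 * L * C <= tau * R0).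
        { assert (24 * L * C / tau * tau = 24 * L * C) by (field; lra). nra. }
        nra. }
      assert (Hsum : C + e * (4 * R0 + 15) + Rabs (aR u R0) <= 4 * C + 16 * e * R0 + 60 * e) by (unfold G0 in *; nra).
      assert (Hfin : q * (C + e * (4 * R0 + 15) + Rabs (aR u R0)) <= 4 * q * C + 48 * L * e + 12 * L * e).
      { pose proof (Rabs_pos (aR u R0)). assert (q * (C + e * (4 * R0 + 15) + Rabs (aR u R0)) <= q * (4 * C + 16 * e * R0 + 60 * e)) by (apply Rmult_le_compat_l; auto). nra. }
      assert (Ee : (1 + 64 * L) * e = tau / 2) by (unfold e; field; lra).
      nra. }
    replace (lambda_d - K * delta eta u R0 - lambda_d) with (- (K * delta eta u R0)) by ring.
    rewrite Rabs_Ropp, Rabs_right by nra.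
    assert (K * tau < eps).
    { unfold tau. apply (Rmult_lt_reg_r (K + 1)); [lra|]. unfold Rdiv.
      replace (K * (eps * / (K + 1)) * (K + 1)) with (K * eps) by (field; lra). nra. }
    nra.
Qed.
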